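(* For each $q\ge 1$ there exists a constant $C_q>0$ such that for every $n>0$ there exists a Boolean function $f:\{0,1\}^n\to\{0,1\}$ whose stringent $q$-ary quantum circuit complexity is at least $C_q\cdot 2^n/n$.
   Context: $V$ is a 2-dimensional complex Hermitian space with orthonormal basis $|0\rangle,|1\rangle$. For $f:\{0,1\}^n\to\{0,1\}$, $U_f\in\mathbf{U}(V^{\otimes(n+1)})$ is defined by $U_f(|\mathbf{x}\rangle\otimes|y\rangle) = |\mathbf{x}\rangle\otimes|f(x)\oplus y\rangle$. A $q$-ary quantum gate is an element $U_g\in\mathbf{U}(V^{\otimes q})$; applied to an ordered choice $\mathbf{i}=(i_1<\cdots<i_q)$ of $q$ of the $m$ tensor factors it gives $U_{g,\mathbf{i}}\in\mathbf{U}(V^{\otimes m})$, namely $U_g$ acting on factors $i_1,\ldots,i_q$ tensored with the identity on the others. The $q$-ary quantum circuit complexity of $U\in\mathbf{U}(V^{\otimes m})$ is the minimum $r$ such that $U = U_{g_1,\mathbf{i}_1}\cdots U_{g_r,\mathbf{i}_r}$ for some $q$-ary gates and index choices. The stringent $q$-ary quantum circuit complexity of $f$ is the $q$-ary quantum circuit complexity of $U_f$ (with $m=n+1$). *)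

(* Defs.v *)
From HB Require Import structures.
From mathcomp Require Import all_boot all_order all_algebra.
From mathcomp Require Import reals.
From mathcomp Require Import complex.
Set Implicit Arguments. Unset Strict Implicit. Unset Printing Implicit Defensive.
Import Order.TTheory GRing.Theory Num.Theory.
Local Open Scope ring_scope.

(* Computational basis of V^{(x)m}: index i : 'I_(2^m); tensor factor j (0 <= j < m)
   carries the qubit value bit i j (the j-th binary digit of i). *)
Definition bit (i j : nat) : bool := odd (i %/ 2 ^ j).

Lemma pow2_gt0 (q : nat) : (0 < 2 ^ q)%N.
Proof. by rewrite expn_gt0. Qed.

Definition op (R : realType) (m : nat) := 'M[R[i]]_(2 ^ m).

Definition conjT (R : realType) (m : nat) (U : op R m) : op R m :=
  map_mx (@conjc R) U^T.

Definition unitary (R : realType) (m : nat) (U : op R m) : Prop :=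
  U *m conjT U = 1%:M.

(* the restriction of a basis index x of V^{(x)m} to the factors sel 0 < ... < sel (q-1),
   as a basis index of V^{(x)q} (factor k of V^{(x)q} <-> factor sel k of V^{(x)m}) *)
Definition restr_idx (q m : nat) (sel : 'I_q -> 'I_m) (x : 'I_(2 ^ m)) : 'I_(2 ^ q) :=
  Ordinal (ltn_pmod (\sum_(k < q) bit x (sel k) * 2 ^ k) (pow2_gt0 q)).

(* U_{g,i}: gate g acting on the factors sel 0, ..., sel (q-1), identity elsewhere *)
Definition embed_gate (R : realType) (q m : nat) (g : op R q) (sel : 'I_q -> 'I_m)
  : op R m :=
  \matrix_(x, y)
    if [forall j : 'I_m, (j \notin codom sel) ==> (bit x j == bit y j)]
    then g (restr_idx sel x) (restr_idx sel y) else 0.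

Definition strictly_increasing (q m : nat) (sel : 'I_q -> 'I_m) : Prop :=
  forall a b : 'I_q, (a < b)%N -> (sel a < sel b)%N.

Definition circuit_of_size (R : realType) (q m : nat) (U : op R m) (r : nat) : Prop :=
  exists (gs : 'I_r -> op R q) (sels : 'I_r -> 'I_q -> 'I_m),
    (forall k, unitary (gs k)) /\ (forall k, strictly_increasing (sels k)) /\
    U = foldr (fun k acc => embed_gate (gs k) (sels k) *m acc) 1%:M (enum 'I_r).

(* U_f on V^{(x)(n+1)}: factors 0..n-1 hold x, factor n holds y *)
Definition Uf (R : realType) (n : nat) (f : {ffun 'I_n -> bool} -> bool) : op R n.+1 :=
  \matrix_(a, b)
    let xa := [ffun k : 'I_n => bit a k] in
    let xb := [ffun k : 'I_n => bit b k] in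
    if (xa == xb) && (bit a n == f xb (+) bit b n) then 1 else 0.

(* Main.v *)
Require Import Defs.
From HB Require Import structures.
From mathcomp Require Import all_boot all_order all_algebra.
From mathcomp Require Import reals.
From mathcomp Require Import complex.
From mathcomp Require Import ring lra zify.
From Stdlib Require Import FunctionalExtensionality Classical ClassicalEpsilon.
Import Order.TTheory GRing.Theory Num.Theory.

Section PartA.
Set Implicit Arguments. Set Strict Implicit.
Set Implicit Arguments.

Lemma bitS x j : bit x j.+1 = bit x./2 j.
Proof. by rewrite /bit expnS divnMA divn2. Qed.
Lemma bit0 x : bit x 0 = odd x.
Proof. by rewrite /bit expn0 divn1. Qed.

Lemma half_bsum (b : bool) s : (b + s.*2)./2 = s.
Proof. by rewrite halfD odd_double andbF add0n doubleK; case: b. Qed.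

Lemma bit_sum m (F : 'I_m -> bool) (i : 'I_m) :
  bit (\sum_(j < m) F j * 2 ^ j) i = F i.
Proof.
elim: m F i => [|m IH] F i; first by case: i.
rewrite big_ord_recl expn0 muln1.
have -> : \sum_(j < m) F (lift ord0 j) * 2 ^ bump 0 j =
          (\sum_(j < m) F (lift ord0 j) * 2 ^ j).*2.
  rewrite -muln2 big_distrl /=; apply: eq_bigr => j _.
  by rewrite /bump /= add1n expnS mulnCA mulnC.
case: i => [[|i] Hi].
  rewrite bit0 oddD odd_double addbF /= oddb.
  by have -> : Ordinal Hi = ord0 by apply: val_inj.
have Hi' : (i < m)%N by [].
change (bit (F ord0 + (\sum_(j < m) F (lift ord0 j) * 2 ^ j).*2) i.+1 = F (Ordinal Hi)); rewrite bitS half_bsum.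
rewrite (IH _ (Ordinal Hi')).
by have -> : Ordinal Hi = lift ord0 (Ordinal Hi') by apply: val_inj.
Qed.

Lemma bsum_lt m (F : 'I_m -> bool) : (\sum_(j < m) F j * 2 ^ j < 2 ^ m)%N.
Proof.
elim: m F => [|m IH] F; first by rewrite big_ord0.
rewrite big_ord_recl expn0 muln1.
have -> : \sum_(j < m) F (lift ord0 j) * 2 ^ bump 0 j =
          (\sum_(j < m) F (lift ord0 j) * 2 ^ j).*2.
  rewrite -muln2 big_distrl /=; apply: eq_bigr => j _.
  by rewrite /bump /= add1n expnS mulnCA mulnC.
have := IH (fun j => F (lift ord0 j)). rewrite expnS. case: (F ord0) => /=; lia.
Qed.

Lemma bit_inj m x z : (x < 2 ^ m)%N -> (z < 2 ^ m)%N ->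
  (forall j, (j < m)%N -> bit x j = bit z j) -> x = z.
Proof.
elim: m x z => [|m IH] x z.
  rewrite expn0 !ltnS !leqn0 => /eqP -> /eqP -> //.
move=> hx hz hb.
have h0 := hb 0 isT. rewrite !bit0 in h0.
have hh : x./2 = z./2.
  apply: IH.
  - by rewrite ltn_half_double -muln2 mulnC -expnS.
  - by rewrite ltn_half_double -muln2 mulnC -expnS.
  - by move=> j hj; rewrite -!bitS; apply: hb.
by rewrite -(odd_double_half x) -(odd_double_half z) h0 hh.
Qed.

End PartA.

Section PartB.
Set Implicit Arguments. Set Strict Implicit.
Set Implicit Arguments.

Definition agr (q m : nat) (sel : 'I_q -> 'I_m) (x y : 'I_(2 ^ m)) : bool :=
  [forall j : 'I_m, (j \notin codom sel) ==> (bit x j == bit y j)].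

Section Bits.
Variables (q m : nat) (sel : 'I_q -> 'I_m).
Hypothesis sel_inj : injective sel.

Lemma restr_bit (x : 'I_(2 ^ m)) (k : 'I_q) : bit (restr_idx sel x) k = bit x (sel k).
Proof.
have -> : nat_of_ord (restr_idx sel x) = (\sum_(k < q) bit x (sel k) * 2 ^ k)%N.
  rewrite /= modn_small //; exact (bsum_lt (fun k => bit x (sel k))).
exact: (bit_sum (fun k => bit x (sel k))).
Qed.

Lemma agr_refl x : agr sel x x.
Proof. by apply/forallP => j; rewrite eqxx implybT. Qed.

Lemma agr_trans x y z : agr sel x y -> agr sel z y -> agr sel x z.
Proof.
move=> /forallP h1 /forallP h2; apply/forallP => j; apply/implyP => hj.
by move: (h1 j) (h2 j); rewrite hj /= => /eqP -> /eqP ->.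
Qed.

Lemma agr_sym x y : agr sel x y -> agr sel y x.
Proof. by move=> h; apply: agr_trans (agr_refl y) h. Qed.

Lemma agr_restr_inj x z : agr sel x z -> restr_idx sel x = restr_idx sel z -> x = z.
Proof.
move=> /forallP ha hr; apply: val_inj; apply: (@bit_inj m _ _ (ltn_ord x) (ltn_ord z)).
move=> j hj; pose jj := Ordinal hj.
case: (boolP (jj \in codom sel)) => hc.
  have [k hk] := codomP hc.
  by rewrite -[j]/(nat_of_ord jj) hk -!restr_bit hr.
by move: (ha jj); rewrite hc /= => /eqP.
Qed.

Lemma agr_exists (x : 'I_(2 ^ m)) (b : 'I_(2 ^ q)) :
  exists y : 'I_(2 ^ m), agr sel x y && (restr_idx sel y == b).
Proof.
pose c (j : 'I_m) : bool :=
  if [pick k | sel k == j] is Some k then bit b k else bit x j.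
exists (Ordinal (bsum_lt c)); apply/andP; split.
  apply/forallP => j; apply/implyP => hj /=.
  rewrite bit_sum /c; case: pickP => [k /eqP hk|_]; last by [].
  by move: hj; rewrite -hk codom_f.
apply/eqP/val_inj; apply: (@bit_inj q _ _ (ltn_ord _) (ltn_ord b)) => k hk.
rewrite (restr_bit _ (Ordinal hk)) /= bit_sum /c.
case: pickP => [k' /eqP /sel_inj -> //| /(_ (Ordinal hk))]; by rewrite eqxx.
Qed.

Local Open Scope ring_scope.
Lemma sum_agr (V : nmodType) (x : 'I_(2 ^ m)) (h : 'I_(2 ^ q) -> V) :
  \sum_(y < 2 ^ m) (if agr sel x y then h (restr_idx sel y) else 0) =
  \sum_(b < 2 ^ q) h b.
Proof.
have e1 : forall y : 'I_(2 ^ m), (if agr sel x y then h (restr_idx sel y) else 0) =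
   \sum_(b < 2 ^ q) (if agr sel x y && (restr_idx sel y == b) then h b else 0).
  move=> y; case: ifP => hy /=; last by rewrite big1.
  rewrite (bigD1 (restr_idx sel y)) //= eqxx big1 ?addr0 // => b hb.
  by rewrite eq_sym (negbTE hb).
rewrite (eq_bigr _ (fun y _ => e1 y)) exchange_big /=; apply: eq_bigr => b _.
have [y0 /andP [hy0 /eqP hr0]] := agr_exists x b.
rewrite (bigD1 y0) //= hy0 hr0 eqxx big1 ?addr0 // => y hy.
case: ifP => // /andP [hxy /eqP hry].
case/eqP: hy; apply: agr_restr_inj; last by rewrite hry hr0.
exact: (agr_trans _ _ _ (agr_sym _ _ hxy) (agr_sym _ _ hy0)).
Qed.

End Bits.

End PartB.

Section PartD.
Set Implicit Arguments. Unset Strict Implicit.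
Local Open Scope ring_scope.
Local Open Scope complex_scope.
Set Implicit Arguments. Unset Strict Implicit.

Lemma ReD (R : realType) (a b : R[i]) : complex.Re (a + b) = complex.Re a + complex.Re b.
Proof. case: a => a1 a2; case: b => b1 b2 /=. by []. Qed.
Lemma ImD (R : realType) (a b : R[i]) : complex.Im (a + b) = complex.Im a + complex.Im b.
Proof. case: a => a1 a2; case: b => b1 b2 /=. by []. Qed.
Lemma ReM (R : realType) (a b : R[i]) : complex.Re (a * b) = complex.Re a * complex.Re b - complex.Im a * complex.Im b.
Proof. case: a => a1 a2; case: b => b1 b2 /=. by []. Qed.
Lemma ImM (R : realType) (a b : R[i]) : complex.Im (a * b) = complex.Re a * complex.Im b + complex.Im a * complex.Re b.
Proof. case: a => a1 a2; case: b => b1 b2 /=. ring. Qed.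
Lemma ReN (R : realType) (a : R[i]) : complex.Re (- a) = - complex.Re a.
Proof. case: a => a1 a2 /=. by []. Qed.
Lemma ImN (R : realType) (a : R[i]) : complex.Im (- a) = - complex.Im a.
Proof. case: a => a1 a2 /=. by []. Qed.
Lemma Re0 (R : realType) : complex.Re (0 : R[i]) = 0. Proof. by []. Qed.
Lemma Im0 (R : realType) : complex.Im (0 : R[i]) = 0. Proof. by []. Qed.
Lemma Re1 (R : realType) : complex.Re (1 : R[i]) = 1. Proof. by []. Qed.
Lemma Im1 (R : realType) : complex.Im (1 : R[i]) = 0. Proof. by []. Qed.
Lemma Reconj (R : realType) (a : R[i]) : complex.Re (a^*) = complex.Re a. Proof. case: a => a1 a2 /=. by []. Qed.
Lemma Imconj (R : realType) (a : R[i]) : complex.Im (a^*) = - complex.Im a. Proof. case: a => a1 a2 /=. by []. Qed.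

Definition nrm (R : realType) (z : R[i]) : R := `|complex.Re z| + `|complex.Im z|.

Lemma nrm_ge0 (R : realType) (z : R[i]) : 0 <= nrm z.
Proof. by rewrite /nrm addr_ge0. Qed.

Lemma nrm0 (R : realType) : nrm (0 : R[i]) = 0.
Proof. by rewrite /nrm Re0 Im0 normr0 addr0. Qed.

Lemma nrmD (R : realType) (a b : R[i]) : nrm (a + b) <= nrm a + nrm b.
Proof.
rewrite /nrm ReD ImD.
have h1 := ler_normD (complex.Re a) (complex.Re b).
have h2 := ler_normD (complex.Im a) (complex.Im b).
lra.
Qed.

Lemma nrmN (R : realType) (a : R[i]) : nrm (- a) = nrm a.
Proof. by rewrite /nrm ReN ImN !normrN. Qed.

Lemma nrmM (R : realType) (a b : R[i]) : nrm (a * b) <= nrm a * nrm b.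
Proof.
rewrite /nrm ReM ImM.
set a1 := complex.Re a; set a2 := complex.Im a; set b1 := complex.Re b; set b2 := complex.Im b.
have h1 := ler_normB (a1 * b1) (a2 * b2).
have h2 := ler_normD (a1 * b2) (a2 * b1).
rewrite !normrM in h1 h2.
have e : (`|a1| + `|a2|) * (`|b1| + `|b2|) =
   `|a1| * `|b1| + `|a2| * `|b2| + (`|a1| * `|b2| + `|a2| * `|b1|) by ring.
rewrite e; lra.
Qed.

Lemma nrm_sum (R : realType) (I : finType) (F : I -> R[i]) :
  nrm (\sum_i F i) <= \sum_i nrm (F i).
Proof.
apply: (big_ind2 (fun x y => nrm x <= y)); first by rewrite nrm0.
  move=> x1 y1 x2 y2 h1 h2; apply: le_trans (nrmD _ _) _; exact: lerD.
by [].
Qed.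

Lemma nrm_conj_mul (R : realType) (z : R[i]) :
  complex.Re (z * z^*) = complex.Re z ^+ 2 + complex.Im z ^+ 2.
Proof. rewrite ReM Reconj Imconj; ring. Qed.

Lemma Re_sum (R : realType) (I : finType) (F : I -> R[i]) :
  complex.Re (\sum_i F i) = \sum_i complex.Re (F i).
Proof. exact: (big_morph _ (@ReD R) (Re0 R)). Qed.

End PartD.

Section PartC.
Set Implicit Arguments. Set Strict Implicit.
Set Implicit Arguments.
Local Open Scope ring_scope.

Lemma conjT_mul (R : realType) m (A B : op R m) : conjT (A *m B) = conjT B *m conjT A.
Proof. by rewrite /conjT trmx_mul map_mxM. Qed.

Lemma conjT1 (R : realType) m : conjT (1%:M : op R m) = 1%:M.
Proof. by rewrite /conjT trmx1 map_mx1. Qed.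

Lemma unitary1 (R : realType) m : unitary (1%:M : op R m).
Proof. by rewrite /unitary conjT1 mulmx1. Qed.

Lemma unitaryM (R : realType) m (A B : op R m) :
  unitary A -> unitary B -> unitary (A *m B).
Proof.
rewrite /unitary conjT_mul => hA hB.
by rewrite mulmxA -(mulmxA A) hB mulmx1 hA.
Qed.

Lemma embed_unitary (R : realType) q m (g : op R q) (sel : 'I_q -> 'I_m) :
  injective sel -> unitary g -> unitary (embed_gate g sel).
Proof.
move=> si hg; apply/matrixP => x z.
set rx := restr_idx sel x; set rz := restr_idx sel z.
have -> : (embed_gate g sel *m conjT (embed_gate g sel)) x z =
   \sum_y (if agr sel x y then g rx (restr_idx sel y) else 0) *
          conjc (if agr sel z y then g rz (restr_idx sel y) else 0).
  by rewrite !mxE; apply: eq_bigr => y _; rewrite !mxE.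
have hg' := congr1 (fun M : op R q => M rx rz) (hg : _ = _); rewrite /= !mxE in hg'.
rewrite mxE.
case: (boolP (agr sel x z)) => hxz.
  rewrite (eq_bigr (fun y => if agr sel x y then g rx (restr_idx sel y) *
                 conjc (g rz (restr_idx sel y)) else 0)); last first.
    move=> y _; have -> : agr sel z y = agr sel x y.
      apply/idP/idP => h.
        exact: (agr_trans _ _ _ _ hxz (agr_sym _ _ _ h)).
      exact: (agr_trans _ _ _ _ (agr_sym _ _ _ hxz) (agr_sym _ _ _ h)).
    by case: ifP; rewrite ?mul0r.
  rewrite (sum_agr si _ x (fun b => g rx b * conjc (g rz b))).
  have -> : (x == z) = (rx == rz).
    apply/eqP/eqP => [hh|h]; first by rewrite /rx /rz hh.
    exact: agr_restr_inj hxz h.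
  rewrite -hg'; apply: eq_bigr => b _; by rewrite !mxE.
have -> : (x == z) = false.
  by apply/negbTE; apply: contraNneq hxz => ->; exact: agr_refl.
rewrite big1 // => y _.
case: ifP => h1; case: ifP => h2; rewrite ?mul0r ?conjc0 ?mulr0 //.
by case/negP: hxz; exact: (agr_trans _ _ _ _ h1 h2).
Qed.

Lemma unitary_entry2 (R : realType) m (U : op R m) : unitary U ->
  forall i j, `|complex.Re (U i j)| <= 1 /\ `|complex.Im (U i j)| <= 1.
Proof.
move=> hU i j.
have h := congr1 (fun M : op R m => M i i) (hU : _ = _); rewrite /= !mxE eqxx in h.
have h2 := congr1 (@complex.Re R) h.
rewrite Re_sum /= in h2.
have e : forall k, complex.Re (U i k * (map_mx conjc U^T) k i) =
    complex.Re (U i k) ^+ 2 + complex.Im (U i k) ^+ 2.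
  by move=> k; rewrite !mxE nrm_conj_mul.
rewrite (eq_bigr _ (fun k _ => e k)) (bigD1 j) //= in h2.
have hr : 0 <= \sum_(k < 2 ^ m | k != j)
    (complex.Re (U i k) ^+ 2 + complex.Im (U i k) ^+ 2).
  by apply: sumr_ge0 => k _; rewrite addr_ge0 // sqr_ge0.
set a := complex.Re (U i j) in h2 *; set b := complex.Im (U i j) in h2 *.
have ha := real_normK (num_real a); have hb := real_normK (num_real b).
have ga := normr_ge0 a; have gb := normr_ge0 b.

have : `|a| ^+ 2 + `|b| ^+ 2 <= 1.
  rewrite ha hb; move: h2 hr. set S := \sum_(_ < _ | _) _. move=> h2 hr.
  have : complex.Re (1 : R[i]) = 1 by []. lra.
move: ga gb; set ta := `|a|; set tb := `|b| => ga gb hh.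
have h1 : ta <= 1 by nra.
have h3 : tb <= 1 by nra.
by split.
Qed.

Lemma unitary_entry (R : realType) m (U : op R m) : unitary U ->
  forall i j, nrm (U i j) <= 2.
Proof.
move=> hU i j; have [h1 h2] := unitary_entry2 hU i j; rewrite /nrm; lra.
Qed.

Lemma tri_bound (R : realType) m (L M Q : op R m) (eps : R) :
  unitary L -> unitary Q -> (forall a b, nrm (M a b) <= eps) ->
  forall i j, nrm ((L *m M *m Q) i j) <= (2 ^ m)%:R * ((2 ^ m)%:R * (4 * eps)).
Proof.
move=> hL hQ hM i j; rewrite mxE.
apply: le_trans (nrm_sum _) _.
have -> : (2 ^ m)%:R * ((2 ^ m)%:R * (4 * eps)) =
   \sum_(b < 2 ^ m) ((2 ^ m)%:R * (4 * eps)) :> R.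
  by rewrite sumr_const card_ord mulr_natl.
apply: ler_sum => b _.
apply: le_trans (nrmM _ _) _; rewrite mxE.
have hq := unitary_entry hQ b j.
have hs : nrm (\sum_(a < 2 ^ m) L i a * M a b) <= (2 ^ m)%:R * (2 * eps).
  apply: le_trans (nrm_sum _) _.
  have -> : (2 ^ m)%:R * (2 * eps) = \sum_(a < 2 ^ m) (2 * eps) :> R.
    by rewrite sumr_const card_ord mulr_natl.
  apply: ler_sum => a _; apply: le_trans (nrmM _ _) _.
  have := unitary_entry hL i a; have := hM a b; have := nrm_ge0 (L i a); have := nrm_ge0 (M a b); nra.
have he : 0 <= eps by apply: le_trans (nrm_ge0 _) (hM i i).
have hn := nrm_ge0 (\sum_(a < 2 ^ m) L i a * M a b).
have hqq := nrm_ge0 (Q b j).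
have hD : 0 <= (2 ^ m)%:R :> R by [].
nra.
Qed.

Definition prodl (R : realType) m (I : Type) (A : I -> op R m) (s : seq I) : op R m :=
  foldr (fun k acc => A k *m acc) 1%:M s.

Lemma prodl_unitary (R : realType) m (I : Type) (A : I -> op R m) s :
  (forall k, unitary (A k)) -> unitary (prodl A s).
Proof.
move=> hA; elim: s => [|k s IH] /=; first exact: unitary1.
exact: unitaryM.
Qed.

Lemma approx (R : realType) m (I : Type) (A B : I -> op R m) (eps : R) (s : seq I) :
  (forall k, unitary (A k)) -> (forall k, unitary (B k)) ->
  (forall k a b, nrm (A k a b - B k a b) <= eps) ->
  forall L, unitary L -> forall i j,
  nrm ((L *m (prodl A s - prodl B s)) i j) <=
    (size s)%:R * ((2 ^ m)%:R * ((2 ^ m)%:R * (4 * eps))).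
Proof.
move=> hA hB hAB; elim: s => [|k s IH] L hL i j /=.
  by rewrite subrr mulmx0 mxE nrm0 mul0r.
have -> : L *m (A k *m prodl A s - B k *m prodl B s) =
    (L *m A k) *m (prodl A s - prodl B s) + L *m (A k - B k) *m prodl B s.
  by rewrite !mulmxBr !mulmxBl !mulmxA addrA subrK.
rewrite mxE; apply: le_trans (nrmD _ _) _.
have h1 := IH (L *m A k) (unitaryM hL (hA k)) i j.
have h2' : nrm ((L *m (A k - B k) *m prodl B s) i j) <=
   (2 ^ m)%:R * ((2 ^ m)%:R * (4 * eps)).
  apply: (@tri_bound R m L (A k - B k) (prodl B s) eps hL (prodl_unitary B s hB)) => a b.
  by rewrite !mxE.
rewrite -[(size s).+1]addn1 natrD; lra.
Qed.

Lemma embed_diff (R : realType) q m (g g' : op R q) (sel : 'I_q -> 'I_m) (eps : R) :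
  0 <= eps -> (forall a b, nrm (g a b - g' a b) <= eps) ->
  forall x y, nrm (embed_gate g sel x y - embed_gate g' sel x y) <= eps.
Proof.
move=> he h x y; rewrite !mxE; case: ifP => _ //.
by rewrite subrr nrm0.
Qed.

Definition mkc n (x0 : {ffun 'I_n -> bool}) (t : bool) (j : 'I_n.+1) : bool :=
  if (insub (val j) : option 'I_n) is Some k then x0 k else t.

Definition mkidx n (x0 : {ffun 'I_n -> bool}) (t : bool) : 'I_(2 ^ n.+1) :=
  Ordinal (bsum_lt (mkc x0 t)).

Lemma mkidx_low n (x0 : {ffun 'I_n -> bool}) t (k : 'I_n) : bit (mkidx x0 t) k = x0 k.
Proof.
rewrite /mkidx /= -[nat_of_ord k]/(nat_of_ord (widen_ord (leqnSn n) k)) bit_sum /mkc /=.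
case: insubP => [k' _ hv|]; last by rewrite /= ltn_ord.
by have -> : k' = k by apply: val_inj.
Qed.

Lemma mkidx_top n (x0 : {ffun 'I_n -> bool}) t : bit (mkidx x0 t) n = t.
Proof.
rewrite /mkidx /= -[n]/(nat_of_ord (@ord_max n)) bit_sum /mkc /=.
by case: insubP => [k' hk' hv|//]; move: (ltn_ord k'); rewrite hv /= ltnn.
Qed.

Lemma mkidx_ffun n (x0 : {ffun 'I_n -> bool}) t : [ffun k : 'I_n => bit (mkidx x0 t) k] = x0.
Proof. by apply/ffunP => k; rewrite ffunE mkidx_low. Qed.

Lemma Uf_sep (R : realType) n (F F' : {ffun 'I_n -> bool} -> bool) x0 :
  F x0 != F' x0 ->
  exists a b, Uf R F a b = 1 /\ Uf R F' a b = 0.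
Proof.
move=> hx; exists (mkidx x0 (F x0)), (mkidx x0 false).
rewrite !mxE /= !mkidx_ffun !mkidx_top eqxx /= addbF eqxx /=; split => //.
by rewrite addbF (negbTE hx).
Qed.

End PartC.

Section PartF.
Unset Implicit Arguments. Set Strict Implicit.

Lemma expmono x y e : x <= y -> x ^ e <= y ^ e.
Proof. by case: e => [|e] //= h; rewrite leq_exp2r. Qed.

Lemma arith q n B : 0 < n -> 0 < B ->
  B * n * (20 * (2 ^ q * 2 ^ q) + q + 2) <= 2 ^ n ->
  B * ((((2 * (8 * B * 2 ^ n.+1 * 2 ^ n.+1)).+1 * (2 * (8 * B * 2 ^ n.+1 * 2 ^ n.+1)).+1)
         ^ (2 ^ q * 2 ^ q)) ^ B) * ((n.+1 ^ q) ^ B) < 2 ^ (2 ^ n).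
Proof.
move=> hn hB hH.
set dd := 2 ^ q * 2 ^ q.
have hB2 : B <= 2 ^ n.
  apply: leq_trans hH; rewrite -mulnA leq_pmulr // muln_gt0 hn /=; lia.
have hK : 8 * B * 2 ^ n.+1 * 2 ^ n.+1 <= 2 ^ (3 * n + 5).
  have -> : 2 ^ (3 * n + 5) = 8 * 2 ^ n * 2 ^ n.+1 * 2 ^ n.+1.
    rewrite -[8]/(2 ^ 3) -!expnD; congr (2 ^ _); lia.
  by rewrite !leq_mul2r leq_mul2l hB2 !orbT.
have hW : (2 * (8 * B * 2 ^ n.+1 * 2 ^ n.+1)).+1 <= 2 ^ (3 * n + 7).
  have -> : 2 ^ (3 * n + 7) = 4 * 2 ^ (3 * n + 5) by rewrite -[4]/(2 ^ 2) -expnD; congr (2 ^ _); lia.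
  have : 0 < 2 ^ (3 * n + 5) by rewrite expn_gt0.
  lia.
have hWW : ((2 * (8 * B * 2 ^ n.+1 * 2 ^ n.+1)).+1 * (2 * (8 * B * 2 ^ n.+1 * 2 ^ n.+1)).+1)
     <= 2 ^ ((3 * n + 7) * 2).
  by rewrite expnM -mulnn leq_mul.
have h1 : (((2 * (8 * B * 2 ^ n.+1 * 2 ^ n.+1)).+1 * (2 * (8 * B * 2 ^ n.+1 * 2 ^ n.+1)).+1)
         ^ dd) ^ B <= 2 ^ ((3 * n + 7) * 2 * dd * B).
  apply: (leq_trans (expmono _ _ B (expmono _ _ dd hWW))); by rewrite -!expnM mulnA.
have h2 : (n.+1 ^ q) ^ B <= 2 ^ (n * q * B).
  rewrite !expnM; apply: expmono; apply: expmono; exact: ltn_expl.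
have h3 : B <= 2 ^ n := hB2.
apply: (leq_ltn_trans (leq_mul (leq_mul h3 h1) h2)).
rewrite -!expnD ltn_exp2l //.
have e1 : (3 * n + 7) * 2 * dd * B <= 20 * (n * B * dd).
  have : (3 * n + 7) * 2 <= 20 * n by lia.
  move=> h; apply: (leq_trans (leq_mul (leq_mul h (leqnn dd)) (leqnn B))).
  by rewrite /dd -!mulnA [B * _]mulnC -!mulnA.
have e2 : n < 2 * (n * B) by nia.
move: hH; rewrite !mulnDr.
nia.
Qed.

End PartF.

Section PartM.
Set Implicit Arguments. Unset Strict Implicit.
Set Implicit Arguments. Unset Strict Implicit.
Local Open Scope ring_scope.

Definition rnd (R : realType) (K : nat) (x : R) : nat := Num.truncn ((x + 1) * K%:R).

Lemma rnd_le (R : realType) K (x : R) : `|x| <= 1 -> (rnd K x <= 2 * K)%N.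
Proof.
move=> hx; rewrite /rnd truncn_le_nat.
have hk : 0 <= K%:R :> R by [].
have e : (2 * K)%N.+1%:R = 2 * K%:R + 1 :> R by rewrite -addn1 natrD natrM.
rewrite e; move: hx; rewrite ler_norml => /andP [h1 h2]; nra.
Qed.

Lemma rnd_close (R : realType) K (x y : R) : (0 < K)%N -> `|x| <= 1 -> `|y| <= 1 ->
  rnd K x = rnd K y -> `|x - y| <= 1 / K%:R.
Proof.
move=> hK hx hy; rewrite /rnd.
have hk : 0 < K%:R :> R by rewrite ltr0n.
move: hx hy; rewrite !ler_norml => /andP [hx1 hx2] /andP [hy1 hy2].
have ha : 0 <= (x + 1) * K%:R by nra.
have hb : 0 <= (y + 1) * K%:R by nra.
have [a1 a2] := andP (truncn_itv ha); have [b1 b2] := andP (truncn_itv hb).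
move=> e; rewrite e in a1 a2.
move: a1 a2 b1 b2; set t := (Num.truncn _)%:R; set t1 := (Num.truncn _).+1%:R.
have et : t1 = t + 1 by rewrite /t1 /t -addn1 natrD.
rewrite et => a1 a2 b1 b2.
rewrite ler_pdivlMr //; apply/andP; split; last nra.
have hu : K%:R * (1 / K%:R) = 1 :> R by field; rewrite lt0r_neq0.
have hu0 : 0 < 1 / K%:R :> R by rewrite divr_gt0.
move: hu hu0; set u := 1 / K%:R => hu hu0.
nra.
Qed.

Definition gcode (R : realType) q (K : nat) (g : op R q) :
  {ffun 'I_(2 ^ q) * 'I_(2 ^ q) -> 'I_(2 * K).+1 * 'I_(2 * K).+1} :=
  [ffun ab => (inord (rnd K (complex.Re (g ab.1 ab.2))),
               inord (rnd K (complex.Im (g ab.1 ab.2))))].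

Lemma gcode_close (R : realType) q K (g g' : op R q) : (0 < K)%N ->
  unitary g -> unitary g' -> gcode K g = gcode K g' ->
  forall a b, nrm (g a b - g' a b) <= 2 / K%:R.
Proof.
move=> hK hg hg' hc a b.
have := congr1 (fun f : {ffun _ -> _} => f (a, b)) hc; rewrite !ffunE /= => [[e1 e2]].
have [r1 i1] := unitary_entry2 hg a b; have [r2 i2] := unitary_entry2 hg' a b.
have := congr1 (@nat_of_ord _) e1; rewrite !inordK ?ltnS ?rnd_le // => /(rnd_close hK r1 r2) h1.
have := congr1 (@nat_of_ord _) e2; rewrite !inordK ?ltnS ?rnd_le // => /(rnd_close hK i1 i2) h2.
rewrite /nrm ReD ImD ReN ImN.
have -> : 2 / K%:R = 1 / K%:R + 1 / K%:R :> R by rewrite -mulrDl.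
exact: lerD.
Qed.

Lemma si_inj q m (sel : 'I_q -> 'I_m) : strictly_increasing sel -> injective sel.
Proof.
move=> h a b e; case: (ltngtP a b) => hab.
- by have := h _ _ hab; rewrite e ltnn.
- by have := h _ _ hab; rewrite e ltnn.
- exact: val_inj.
Qed.

Lemma insub_ord r (k : 'I_r) : (insub (nat_of_ord k) : option 'I_r) = Some k.
Proof. by case: insubP => [k' _ /val_inj -> //|]; rewrite ltn_ord. Qed.

Definition circ (R : realType) q n :=
  {r : nat & (('I_r -> op R q) * ('I_r -> 'I_q -> 'I_n.+1))%type}.

Definition cprod (R : realType) q n (p : circ R q n) : op R n.+1 :=
  foldr (fun k acc => embed_gate ((projT2 p).1 k) ((projT2 p).2 k) *m acc) 1%:M
    (enum 'I_(projT1 p)).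

Definition cvalid (R : realType) q n (p : circ R q n) : Prop :=
  (forall k, unitary ((projT2 p).1 k)) /\ (forall k, strictly_increasing ((projT2 p).2 k)).

Definition ccode (R : realType) q n (B' K : nat) (p : circ R q n) :
  ('I_B'.+1 * {ffun 'I_B'.+1 -> {ffun 'I_(2 ^ q) * 'I_(2 ^ q) -> 'I_(2 * K).+1 * 'I_(2 * K).+1}}
    * {ffun 'I_B'.+1 -> {ffun 'I_q -> 'I_n.+1}})%type :=
  (inord (projT1 p),
   [ffun k : 'I_B'.+1 => if (insub (nat_of_ord k) : option 'I_(projT1 p)) is Some k'
       then gcode K ((projT2 p).1 k') else [ffun _ => (ord0, ord0)]],
   [ffun k : 'I_B'.+1 => if (insub (nat_of_ord k) : option 'I_(projT1 p)) is Some k'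
       then [ffun i => (projT2 p).2 k' i] else [ffun _ => ord0]]).

Lemma ccode_close (R : realType) q n B' K (p p' : circ R q n) : (0 < K)%N ->
  cvalid p -> cvalid p' -> (projT1 p < B'.+1)%N -> (projT1 p' < B'.+1)%N ->
  ccode B' K p = ccode B' K p' ->
  forall a b, nrm (cprod p a b - cprod p' a b) <=
    (projT1 p)%:R * ((2 ^ n.+1)%:R * ((2 ^ n.+1)%:R * (4 * (2 / K%:R)))).
Proof.
case: p => r [gs sels]; case: p' => r' [gs' sels'] /= hK [hg hs] [hg' hs'] hr hr'.
case=> e0 e1 e2.
have := congr1 (@nat_of_ord _) e0; rewrite !inordK // => er; subst r'.
have eg : forall k : 'I_r, gcode K (gs k) = gcode K (gs' k).
  move=> k; have hk : (k < B'.+1)%N by apply: ltn_trans hr.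
  have := congr1 (fun f : {ffun _ -> _} => f (Ordinal hk)) e1.
  by rewrite !ffunE /= insub_ord.
have es : forall k : 'I_r, sels k = sels' k.
  move=> k; have hk : (k < B'.+1)%N by apply: ltn_trans hr.
  have := congr1 (fun f : {ffun _ -> _} => f (Ordinal hk)) e2.
  rewrite !ffunE /= insub_ord => /ffunP ef.
  by apply: functional_extensionality => i; have := ef i; rewrite !ffunE.
move=> a b.
have hA : forall k : 'I_r, unitary (embed_gate (gs k) (sels k)).
  by move=> k; apply: embed_unitary; [exact: si_inj|].
have hB : forall k : 'I_r, unitary (embed_gate (gs' k) (sels' k)).
  by move=> k; apply: embed_unitary; [exact: si_inj|].
have hAB : forall (k : 'I_r) x y, nrm (embed_gate (gs k) (sels k) x y -
     embed_gate (gs' k) (sels' k) x y) <= 2 / K%:R.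
  move=> k x y; rewrite -es; apply: embed_diff => //.
    by rewrite divr_ge0.
  exact: gcode_close.
have H := @approx R n.+1 'I_r _ _ (2 / K%:R) (enum 'I_r) hA hB hAB 1%:M (unitary1 _ _) a b.
rewrite mul1mx size_enum_ord !mxE in H.
exact: H.
Qed.

Lemma count_main (R : realType) q n B' : (0 < n)%N ->
  (B'.+1 * n * (20 * (2 ^ q * 2 ^ q) + q + 2) <= 2 ^ n)%N ->
  exists F : {ffun {ffun 'I_n -> bool} -> bool},
    forall r, circuit_of_size q (Uf R F) r -> (B'.+1 <= r)%N.
Proof.
move=> hn hH.
set K := (8 * B'.+1 * 2 ^ n.+1 * 2 ^ n.+1)%N.
have hK : (0 < K)%N by rewrite /K !muln_gt0 !expn_gt0.
case: (classic (exists F : {ffun {ffun 'I_n -> bool} -> bool},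
   forall r, circuit_of_size q (Uf R F) r -> (B'.+1 <= r)%N)) => // hno.
exfalso.
have hall : forall F : {ffun {ffun 'I_n -> bool} -> bool}, exists p : circ R q n,
    [/\ cvalid p, (projT1 p < B'.+1)%N & Uf R F = cprod p].
  move=> F; apply: NNPP => hp; apply: hno; exists F => r [gs [sels [h1 [h2 h3]]]].
  rewrite leqNgt; apply/negP => hr; apply: hp.
  by exists (existT _ r (gs, sels)).
pose ch F := proj1_sig (constructive_indefinite_description _ (hall F)).
have hch : forall F, [/\ cvalid (ch F), (projT1 (ch F) < B'.+1)%N & Uf R F = cprod (ch F)].
  move=> F; exact: (proj2_sig (constructive_indefinite_description _ (hall F))).
have inj : injective (fun F => ccode B' K (ch F)).
  move=> F F' he; apply/ffunP => x0; apply/eqP/negPn/negP => hx.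
  have [a [b [h1 h2]]] := Uf_sep R _ _ _ hx.
  have [v1 b1 e1] := hch F; have [v2 b2 e2] := hch F'.
  have := ccode_close hK v1 v2 b1 b2 he a b.
  rewrite -e1 -e2 h1 h2 subr0.
  have -> : nrm (1 : R[i]) = 1 by rewrite /nrm Re1 Im1 normr0 normr1 addr0.
  move: b1; set r := projT1 (ch F) => b1.
  have hD : (2 ^ n.+1)%:R != 0 :> R by rewrite pnatr_eq0 expn_eq0.
  have hB : (B'.+1)%:R != 0 :> R by rewrite pnatr_eq0.
  have -> : r%:R * ((2 ^ n.+1)%:R * ((2 ^ n.+1)%:R * (4 * (2 / K%:R)))) =
       r%:R / (B'.+1)%:R :> R.
    rewrite /K !natrM; field.
    by rewrite hD andbT addrC natr1.
  move=> h; have : 1 * (B'.+1)%:R <= r%:R :> R.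
    by rewrite -ler_pdivlMr // ltr0n.
  by rewrite mul1r ler_nat leqNgt b1.
have := @leq_card _ _ _ inj.
rewrite !(card_ffun, card_prod, card_ord, card_bool) /K => h.
by have := leq_ltn_trans h (arith q n B'.+1 hn (ltn0Sn _) hH); rewrite ltnn.
Qed.

Lemma final_real (R : realType) (Q n r : nat) : (0 < Q)%N -> (0 < n)%N ->
  (2 ^ n <= r * (2 * Q * n))%N ->
  ((2 * Q)%:R)^-1 * (2 ^ n)%:R / n%:R <= r%:R :> R.
Proof.
move=> hQ hn h.
rewrite ler_pdivrMr ?ltr0n // mulrC ler_pdivrMr ?ltr0n ?muln_gt0 //.
rewrite -!natrM ler_nat; apply: (leq_trans h); nia.
Qed.

Lemma Uf_ne1 (R : realType) n : Uf R [ffun _ : {ffun 'I_n -> bool} => true] != 1%:M.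
Proof.
apply/negP => /eqP /matrixP /(_ (mkidx [ffun _ => false] false) (mkidx [ffun _ => false] false)).
rewrite !mxE; cbv zeta; rewrite ffunE mkidx_top !eqxx /= => /eqP.
by rewrite eq_sym oner_eq0.
Qed.


End PartM.

Unset Implicit Arguments. Set Strict Implicit.
Local Open Scope ring_scope.

Theorem mainTheorem12 (R : realType) (q : nat) : (1 <= q)%N ->
  exists C : R, 0 < C /\
    forall n : nat, (0 < n)%N ->
      exists f : {ffun 'I_n -> bool} -> bool,
        forall r : nat, circuit_of_size q (Uf R f) r ->
          C * (2 ^ n)%:R / n%:R <= r%:R.
Proof.
move=> hq.
set Q := (20 * (2 ^ q * 2 ^ q) + q + 2)%N.
have hQ : (0 < Q)%N by rewrite /Q addn2.
exists ((2 * Q)%:R)^-1; split; first by rewrite invr_gt0 ltr0n muln_gt0.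
move=> n hn.
have hdiv := divn_eq (2 ^ n) (n * Q).
have hmod : (2 ^ n %% (n * Q) < n * Q)%N by rewrite ltn_pmod // muln_gt0 hn.
case hB : (2 ^ n %/ (n * Q))%N => [|B'].
  exists [ffun _ => true] => r hr; apply: final_real => //.
  have hr1 : (0 < r)%N.
    case: r hr => // [[gs [sels [_ [_ e]]]]].
    have e0 : enum 'I_0 = [::] by apply/size0nil; rewrite size_enum_ord.
    by move: e; rewrite e0 /= => /eqP; rewrite (negbTE (Uf_ne1 R n)).
  rewrite hB mul0n add0n in hdiv.
  have : (n * Q <= r * (2 * Q * n))%N.
    nia.
  lia.
have hH : (B'.+1 * n * Q <= 2 ^ n)%N.
  by rewrite -hB -mulnA leq_trunc_div.
have [F hF] := count_main R hn hH.
exists F => r hr; apply: final_real => //.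
have := hF r hr; rewrite hB in hdiv.
move=> hr'.
have : (2 ^ n <= B'.+1 * (2 * Q * n))%N by nia.
move=> h; apply: leq_trans h _; exact: leq_mul.
Qed.
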